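(* For $0<x<\frac12$, $$\gamma_1\left(x+\tfrac12\right)-\gamma_1\left(\tfrac12-x\right)=2[\gamma_1(2x)-\gamma_1(1-2x)]-[\gamma_1(x)-\gamma_1(1-x)]-2\pi\log 2\cdot\cot 2\pi x.$$
   Context: For $x>0$ let $\zeta(s,x)=\sum_{n=0}^{\infty}(n+x)^{-s}$ ($\operatorname{Re}s>1$) be the Hurwitz zeta function, analytically continued to $\mathbb{C}\setminus\{1\}$. The generalised Stieltjes constants $\gamma_n(x)$ are defined by the Laurent expansion $\zeta(s,x)=\frac{1}{s-1}+\sum_{n=0}^{\infty}\frac{(-1)^n}{n!}\gamma_n(x)(s-1)^n$ about $s=1$. *)

(* Defs.v *)
From Stdlib Require Import Reals ClassicalEpsilon.
From Coquelicot Require Import Coquelicot.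
Open Scope R_scope.

Definition hurwitz_zeta (s x : R) : R :=
  Series (fun n : nat => / Rpower (INR n + x) s).

(* c is the sequence of generalised Stieltjes constants at x: the Laurent
   expansion  zeta(s,x) = 1/(s-1) + sum_n (-1)^n/n! c_n (s-1)^n  holds
   (with convergent series) for all real s in a right neighbourhood of 1. *)
Definition is_stieltjes_seq (x : R) (c : nat -> R) : Prop :=
  exists d : R, 0 < d /\
    forall s : R, 1 < s < 1 + d ->
      is_series (fun n : nat => (-1) ^ n / INR (Factorial.fact n) * c n * (s - 1) ^ n)
                (hurwitz_zeta s x - 1 / (s - 1)).

(* gamma_n(x): the (unique) such sequence, chosen by Hilbert's epsilon. *)
Definition stieltjes_seq (x : R) : nat -> R :=
  epsilon (inhabits (fun _ : nat => 0)) (is_stieltjes_seq x).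

Definition gen_stieltjes (n : nat) (x : R) : R := stieltjes_seq x n.

Definition cot (t : R) : R := cos t / sin t.

(* Main.v *)
Require Import Defs.
From Stdlib Require Import Reals Lra Lia Psatz Factorial ClassicalEpsilon.
From Coquelicot Require Import Coquelicot.
Open Scope R_scope.


Lemma is_series_plusR (a b : nat -> R) la lb :
  is_series a la -> is_series b lb -> is_series (fun n => a n + b n) (la + lb).
Proof. intros; exact (is_series_plus _ _ _ _ H H0). Qed.
Lemma is_series_minusR (a b : nat -> R) la lb :
  is_series a la -> is_series b lb -> is_series (fun n => a n - b n) (la - lb).
Proof. intros; exact (is_series_minus _ _ _ _ H H0). Qed.
Lemma is_series_scalR (c : R) (a : nat -> R) l :
  is_series a l -> is_series (fun n => c * a n) (c * l).
Proof. intros; exact (is_series_scal_l c _ _ H). Qed.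

Lemma is_series_lim (a : nat -> R) l : is_series a l <-> is_lim_seq (sum_n a) l.
Proof. split; intro H; exact H. Qed.

Lemma sum_n_SR (a : nat -> R) n : sum_n a (S n) = sum_n a n + a (S n).
Proof. exact (sum_Sn a n). Qed.

Lemma telescope (T : nat -> R) (l : R) :
  is_lim_seq T l -> is_series (fun n => T n - T (S n)) (T O - l).
Proof.
  intro H. apply is_series_lim.
  apply is_lim_seq_ext with (fun n => T O - T (S n)).
  { induction n. rewrite sum_O. ring. rewrite sum_n_SR, <- IHn. ring. }
  apply is_lim_seq_minus'. apply is_lim_seq_const.
  apply -> (is_lim_seq_incr_1 T l). exact H.
Qed.

Lemma series_nonneg_ge (b : nat -> R) B :
  (forall n, 0 <= b n) -> is_series b B -> forall N, sum_n b N <= B.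
Proof.
  intros Hb HB N.
  apply (is_lim_seq_incr_compare (sum_n b) B HB).
  intro n. rewrite sum_n_SR. specialize (Hb (S n)). lra.
Qed.

Lemma series_nonneg_term (b : nat -> R) B :
  (forall n, 0 <= b n) -> is_series b B -> forall N, b N <= B.
Proof.
  intros Hb HB N. apply Rle_trans with (sum_n b N); [|apply series_nonneg_ge; auto].
  destruct N. rewrite sum_O; lra.
  rewrite sum_n_SR. assert (0 <= sum_n b N).
  { clear - Hb. induction N. rewrite sum_O; apply Hb. rewrite sum_n_SR. specialize (Hb (S N)); lra. }
  lra.
Qed.

Lemma sum_n_minusR (f g : nat -> R) N : sum_n (fun n => f n - g n) N = sum_n f N - sum_n g N.
Proof. induction N. rewrite !sum_O. reflexivity. rewrite !sum_n_SR, IHN. lra. Qed.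
Lemma sum_n_plusR (f g : nat -> R) N : sum_n (fun n => f n + g n) N = sum_n f N + sum_n g N.
Proof. induction N. rewrite !sum_O. reflexivity. rewrite !sum_n_SR, IHN. lra. Qed.
Lemma sum_n_scalR (c : R) (f : nat -> R) N : sum_n (fun n => c * f n) N = c * sum_n f N.
Proof. induction N. rewrite !sum_O. reflexivity. rewrite !sum_n_SR, IHN. lra. Qed.
Lemma ex_series_minusR (a b : nat -> R) : ex_series a -> ex_series b -> ex_series (fun n => a n - b n).
Proof. intros [la Ha] [lb Hb]. exists (la - lb). apply is_series_minusR; auto. Qed.
Lemma ex_series_plusR (a b : nat -> R) : ex_series a -> ex_series b -> ex_series (fun n => a n + b n).
Proof. intros [la Ha] [lb Hb]. exists (la + lb). apply is_series_plusR; auto. Qed.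
Lemma is_series_extR (a b : nat -> R) (l : R) : (forall n, a n = b n) -> is_series a l -> is_series b l.
Proof. intros H. apply is_series_ext. exact H. Qed.
Lemma is_series_eqR (a : nat -> R) (l l' : R) : l = l' -> is_series a l -> is_series a l'.
Proof. intros ->; auto. Qed.

Lemma lim_le (u v : nat -> R) (l1 l2 : R) :
  is_lim_seq u l1 -> is_lim_seq v l2 -> (forall n, u n <= v n) -> l1 <= l2.
Proof. intros H1 H2 H. pose proof (is_lim_seq_le u v l1 l2 H H1 H2). exact H0. Qed.

Lemma sum_abs_le (a b : nat -> R) :
  (forall k, Rabs (a k) <= b k) -> forall N, Rabs (sum_n a N) <= sum_n b N.
Proof.
  intros H N. induction N. rewrite !sum_O; auto.
  rewrite !sum_n_SR. eapply Rle_trans. apply Rabs_triang. specialize (H (S N)). lra.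
Qed.

Lemma series_abs_le (f g : nat -> R) F G :
  is_series f F -> is_series g G -> (forall n, Rabs (f n) <= g n) -> Rabs F <= G.
Proof.
  intros HF HG H. apply lim_le with (fun N => Rabs (sum_n f N)) (sum_n g).
  exact (is_lim_seq_abs (sum_n f) F HF). exact HG. apply sum_abs_le; auto.
Qed.

Lemma ex_series_dom (a b : nat -> R) : (forall n, Rabs (a n) <= b n) -> ex_series b -> ex_series a.
Proof. intros H Hb. apply (@ex_series_le R_AbsRing R_CompleteNormedModule a b); auto. Qed.

Lemma sum_lim0 (f : nat -> nat -> R) :
  (forall n, is_lim_seq (fun K => f K n) 0) -> forall N, is_lim_seq (fun K => sum_n (f K) N) 0.
Proof.
  intros H N. induction N.
  - apply is_lim_seq_ext with (fun K => f K O). intro; rewrite sum_O; auto. apply H.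
  - apply is_lim_seq_ext with (fun K => sum_n (f K) N + f K (S N)).
    intro; rewrite sum_n_SR; auto.
    replace (Finite 0) with (Finite (0+0)) by (f_equal; ring).
    apply is_lim_seq_plus'; auto.
Qed.

Lemma fubini (a b : nat -> nat -> R) (B r : nat -> R) :
  (forall n k, Rabs (a n k) <= b n k) ->
  (forall n, is_series (b n) (B n)) -> ex_series B ->
  (forall n, is_series (a n) (r n)) ->
  is_series (fun k => Series (fun n => a n k)) (Series r).
Proof.
  intros Hab HbB HB Har.
  assert (Hb0 : forall n k, 0 <= b n k).
  { intros. eapply Rle_trans. apply Rabs_pos. apply Hab. }
  assert (HbleB : forall n k, b n k <= B n).
  { intros. eapply series_nonneg_term; eauto. }
  assert (HsbB : forall n K, sum_n (b n) K <= B n).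
  { intros. eapply series_nonneg_ge; eauto. }
  assert (Hsb0 : forall n K, 0 <= sum_n (b n) K).
  { intros. eapply Rle_trans. apply Rabs_pos. apply (sum_abs_le (b n) (b n)).
    intro k; rewrite Rabs_pos_eq; auto; lra. }
  assert (HexK : forall K, ex_series (fun n => sum_n (a n) K)).
  { intro K. apply ex_series_dom with B; auto. intro n.
    eapply Rle_trans. apply sum_abs_le with (b := b n). apply Hab. apply HsbB. }
  assert (Hexk : forall k, ex_series (fun n => a n k)).
  { intro k. apply ex_series_dom with B; auto. intro n.
    eapply Rle_trans. apply Hab. apply HbleB. }
  assert (Hexr : ex_series r).
  { apply ex_series_dom with B; auto. intro n.
    apply (series_abs_le (a n) (b n)); auto. }
  assert (HA : forall K, sum_n (fun k => Series (fun n => a n k)) K = Series (fun n => sum_n (a n) K)).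
  { induction K.
    - rewrite sum_O. apply Series_ext. intro; rewrite sum_O; auto.
    - rewrite sum_n_SR, IHK. rewrite <- Series_plus; auto.
      apply Series_ext. intro; rewrite sum_n_SR; auto. }
  assert (HC : forall n K, Rabs (r n - sum_n (a n) K) <= B n - sum_n (b n) K).
  { intros n K.
    assert (Hm : forall m, Rabs (sum_n (a n) (m + K) - sum_n (a n) K) <= sum_n (b n) (m + K) - sum_n (b n) K).
    { induction m. simpl. rewrite Rminus_diag, Rabs_R0. lra.
      replace (S m + K)%nat with (S (m + K)) by lia. rewrite !sum_n_SR.
      replace (sum_n (a n) (m + K) + a n (S (m + K)) - sum_n (a n) K) with
        ((sum_n (a n) (m + K) - sum_n (a n) K) + a n (S (m + K))) by ring.
      pose proof (Rabs_triang (sum_n (a n) (m + K) - sum_n (a n) K) (a n (S (m + K)))).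
      specialize (Hab n (S (m+K))). lra. }
    apply lim_le with (fun m => Rabs (sum_n (a n) (m + K) - sum_n (a n) K))
                      (fun m => sum_n (b n) (m + K) - sum_n (b n) K); auto.
    - apply (is_lim_seq_abs _ (r n - sum_n (a n) K)).
      apply is_lim_seq_minus'. 2: apply is_lim_seq_const.
      apply (is_lim_seq_incr_n (sum_n (a n)) K). apply Har.
    - apply is_lim_seq_minus'. 2: apply is_lim_seq_const.
      apply (is_lim_seq_incr_n (sum_n (b n)) K). apply HbB. }
  set (tau := fun K n => B n - sum_n (b n) K).
  assert (Htau0 : forall K n, 0 <= tau K n). { intros; unfold tau; specialize (HsbB n K); lra. }
  assert (Hextau : forall K, ex_series (tau K)).
  { intro K. apply ex_series_dom with B; auto. intro n. unfold tau.
    rewrite Rabs_pos_eq. specialize (Hsb0 n K); lra. specialize (HsbB n K); lra. }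
  assert (HT : is_lim_seq (fun K => Series (tau K)) 0).
  { apply is_lim_seq_spec. intro eps.
    destruct HB as [SB HSB].
    assert (Htail : is_lim_seq (sum_n B) SB) by exact HSB. apply is_lim_seq_spec in Htail.
    destruct (Htail (pos_div_2 eps)) as [N HN]. specialize (HN N (le_n N)).
    assert (Hfin : is_lim_seq (fun K => sum_n (tau K) N) 0).
    { apply sum_lim0. intro n. unfold tau.
      replace (Finite 0) with (Finite (B n - B n)) by (f_equal; ring).
      apply is_lim_seq_minus'. apply is_lim_seq_const. apply HbB. }
    apply is_lim_seq_spec in Hfin. destruct (Hfin (pos_div_2 eps)) as [K0 HK0].
    exists K0. intros K HK. specialize (HK0 K HK). simpl in HK0, HN.
    assert (HB0 : forall n, 0 <= B n) by (intro n; specialize (HbleB n O); specialize (Hb0 n O); lra).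
    assert (HBN : sum_n B N <= SB) by (apply series_nonneg_ge; auto).
    assert (Hsplit : Series (tau K) <= sum_n (tau K) N + (SB - sum_n B N)).
    { assert (Hg : is_series (fun n => sum_n (b n) K) (SB - Series (tau K))).
      { assert (Hg0 : is_series (fun n => B n - tau K n) (SB - Series (tau K)))
          by (apply is_series_minusR; auto; apply Series_correct; auto).
        revert Hg0. apply is_series_ext. intro n. unfold tau. simpl. ring. }
      pose proof (series_nonneg_ge _ _ (fun n => Hsb0 n K) Hg N).
      assert (sum_n (fun n => sum_n (b n) K) N = sum_n B N - sum_n (tau K) N).
      { rewrite <- sum_n_minusR. apply sum_n_ext. intro n. unfold tau. lra. }
      lra. }
    assert (HT0 : 0 <= Series (tau K)).
    { apply Rle_trans with (sum_n (tau K) O). rewrite sum_O; auto.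
      apply series_nonneg_ge; auto. apply Series_correct; auto. }
    rewrite Rminus_0_r in HK0. rewrite Rminus_0_r, Rabs_pos_eq; auto.
    rewrite Rabs_pos_eq in HK0. rewrite Rabs_minus_sym, Rabs_pos_eq in HN.
    destruct eps as [e He]; simpl in *. lra. lra.
    apply Rle_trans with (sum_n (tau K) O). rewrite sum_O; auto.
    clear -Htau0. induction N. lra. rewrite sum_n_SR. specialize (Htau0 K (S N)); lra. }
  apply is_series_lim.
  apply is_lim_seq_spec. apply is_lim_seq_spec in HT. intro eps. destruct (HT eps) as [K0 HK0].
  exists K0. intros K HK. specialize (HK0 K HK). rewrite HA.
  rewrite <- Series_minus in *; auto.
  eapply Rle_lt_trans; [|exact HK0]. rewrite Rminus_0_r.
  eapply Rle_trans; [|apply Rle_abs].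
  apply (series_abs_le (fun n => sum_n (a n) K - r n) (tau K)).
  apply Series_correct. apply ex_series_minusR; auto. apply Series_correct; auto.
  intro n; rewrite Rabs_minus_sym; apply HC.
Qed.

Lemma INR_y_pos (n : nat) (y : R) : 0 < y -> 0 < INR n + y.
Proof. intro; pose proof (pos_INR n); lra. Qed.

Lemma Rpower_pos (a s : R) : 0 < Rpower a s.
Proof. unfold Rpower; apply exp_pos. Qed.

Lemma lim_Rpower_neg (y e : R) : 0 < y -> 0 < e ->
  is_lim_seq (fun n => Rpower (INR n + y) (- e)) 0.
Proof.
  intros Hy He. apply is_lim_seq_spec. intro eps.
  destruct eps as [ep Hep]. simpl.
  set (X := Rpower ep (- / e)).
  destruct (INR_unbounded X) as [N HN].
  exists N. intros n Hn.
  rewrite Rminus_0_r, Rabs_pos_eq by (left; apply Rpower_pos).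
  assert (HX : 0 < X) by apply Rpower_pos.
  assert (Hn' : X < INR n + y).
  { apply le_INR in Hn. lra. }
  assert (H1 : Rpower X e < Rpower (INR n + y) e) by (apply Rlt_Rpower_l; lra).
  unfold X in H1. rewrite Rpower_mult in H1.
  replace (- / e * e) with (- (1)) in H1 by (field; lra).
  rewrite Rpower_Ropp, Rpower_1 in H1 by lra.
  rewrite Rpower_Ropp.
  assert (0 < Rpower (INR n + y) e) by apply Rpower_pos.
  apply Rinv_lt_contravar in H1. rewrite Rinv_inv in H1. exact H1.
  apply Rmult_lt_0_compat; auto. apply Rinv_0_lt_compat; auto.
Qed.

Lemma zeta_term_bound (a s : R) : 0 < a -> 1 < s ->
  / Rpower (a + 1) s <= (Rpower a (1 - s) - Rpower (a + 1) (1 - s)) / (s - 1).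
Proof.
  intros Ha Hs.
  destruct (MVT_cor2 (fun u => Rpower u (1 - s)) (fun u => (1 - s) * Rpower u (1 - s - 1)) a (a + 1))
    as [c [Hc1 Hc2]]. lra.
  { intros c Hc. apply derivable_pt_lim_power. lra. }
  replace (1 - s - 1) with (- s) in Hc1 by ring.
  rewrite Rpower_Ropp in Hc1.
  replace (Rpower a (1 - s) - Rpower (a + 1) (1 - s)) with ((s - 1) * / Rpower c s).
  2: { replace (a + 1 - a) with 1 in Hc1 by ring. lra. }
  assert (Rpower c s <> 0) by (apply Rgt_not_eq, Rpower_pos).
  replace ((s - 1) * / Rpower c s / (s - 1)) with (/ Rpower c s) by (field; repeat split; auto; lra).
  apply Rinv_le_contravar. apply Rpower_pos.
  left. apply Rlt_Rpower_l; lra.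
Qed.

Lemma hurwitz_ex (s y : R) : 1 < s -> 0 < y ->
  ex_series (fun n => / Rpower (INR n + y) s).
Proof.
  intros Hs Hy.
  apply (ex_series_incr_1 (fun n => / Rpower (INR n + y) s)).
  set (T := fun n => Rpower (INR n + y) (1 - s)).
  assert (HT : is_series (fun n => T n - T (S n)) (T O - 0)).
  { apply telescope. unfold T. replace (1 - s) with (- (s - 1)) by ring.
    apply lim_Rpower_neg; lra. }
  apply ex_series_dom with (fun n => / (s - 1) * (T n - T (S n))).
  2: { eexists. apply is_series_scalR. exact HT. }
  intro n. rewrite Rabs_pos_eq.
  2: { left. apply Rinv_0_lt_compat, Rpower_pos. }
  rewrite S_INR. replace (INR n + 1 + y) with ((INR n + y) + 1) by ring.
  unfold T. rewrite S_INR. replace (INR n + 1 + y) with ((INR n + y) + 1) by ring.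
  rewrite Rmult_comm. apply zeta_term_bound; auto. apply INR_y_pos; auto.
Qed.

Lemma exp_series (u : R) : is_series (fun k => u ^ k / INR (fact k)) (exp u).
Proof.
  pose proof (is_exp_Reals u) as H. unfold is_pseries in H.
  revert H. apply is_series_ext. intro k. rewrite pow_n_pow. reflexivity.
Qed.

Lemma exp_series1 (u : R) : is_series (fun k => u ^ (S k) / INR (fact (S k))) (exp u - 1).
Proof.
  apply (is_series_incr_1 (fun k => u ^ k / INR (fact k))).
  match goal with |- is_series _ ?l => replace l with (exp u) end.
  apply exp_series. simpl. unfold plus; simpl. field.
Qed.

Definition w (k : nat) (a : R) : R :=
  ln a ^ k / a - (ln (a + 1) ^ (S k) - ln a ^ (S k)) / INR (S k).

Lemma fact_pos_R k : 0 < INR (fact k).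
Proof. apply lt_0_INR. apply lt_O_fact. Qed.

Lemma term_identity (t a la lb : R) (k : nat) : t <> 0 -> a <> 0 ->
  / a * ((- t * la) ^ k / INR (fact k))
  - ((- t * la) ^ (S k) / INR (fact (S k)) - (- t * lb) ^ (S k) / INR (fact (S k))) / t
  = (-1) ^ k / INR (fact k) * (la ^ k / a - (lb ^ (S k) - la ^ (S k)) / INR (S k)) * t ^ k.
Proof.
  intros Ht Ha.
  rewrite fact_simpl, mult_INR.
  replace (- t * la) with ((-1) * t * la) by ring.
  replace (- t * lb) with ((-1) * t * lb) by ring.
  rewrite !Rpow_mult_distr. simpl pow.
  assert (0 < INR (fact k)) by apply fact_pos_R.
  assert (0 < INR (S k)) by (apply lt_0_INR; lia).
  field. repeat split; lra.
Qed.

Lemma inner_series (a t : R) : 0 < a -> 0 < t ->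
  is_series (fun k => (-1) ^ k / INR (fact k) * w k a * t ^ k)
    (/ Rpower a (1 + t) - (Rpower a (- t) - Rpower (a + 1) (- t)) / t).
Proof.
  intros Ha Ht.
  assert (H1 : is_series (fun k => / a * ((- t * ln a) ^ k / INR (fact k))) (/ a * exp (- t * ln a)))
    by (apply is_series_scalR; apply exp_series).
  assert (H2 : is_series (fun k => ((- t * ln a) ^ (S k) / INR (fact (S k)) - (- t * ln (a + 1)) ^ (S k) / INR (fact (S k))) / t)
                 (((exp (- t * ln a) - 1) - (exp (- t * ln (a + 1)) - 1)) / t)).
  { apply is_series_extR with (fun k => / t * ((- t * ln a) ^ (S k) / INR (fact (S k)) - (- t * ln (a + 1)) ^ (S k) / INR (fact (S k)))).
    intro; unfold Rdiv; ring.
    replace (((exp (- t * ln a) - 1) - (exp (- t * ln (a + 1)) - 1)) / t) with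
      (/ t * ((exp (- t * ln a) - 1) - (exp (- t * ln (a + 1)) - 1))) by (unfold Rdiv; ring).
    apply is_series_scalR. apply is_series_minusR; apply exp_series1. }
  pose proof (is_series_minusR _ _ _ _ H1 H2) as H3.
  apply is_series_eqR with (/ a * exp (- t * ln a) - ((exp (- t * ln a) - 1) - (exp (- t * ln (a + 1)) - 1)) / t).
  { unfold Rpower. replace ((1 + t) * ln a) with (ln a + t * ln a) by ring.
    rewrite exp_plus, exp_ln by lra. replace (- t * ln a) with (- (t * ln a)) by ring.
    rewrite exp_Ropp. replace (- t * ln (a + 1)) with (- t * ln (a + 1)) by ring.
    assert (exp (t * ln a) > 0) by apply exp_pos. field; repeat split; lra. }
  revert H3. apply is_series_extR. intro k. unfold w.
  apply term_identity; lra.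
Qed.

Lemma pow_bound_aux (x : R) (k : nat) : 0 <= x -> INR k * x ^ (pred k) + x ^ k <= (x + 1) ^ k.
Proof.
  intro Hx. induction k.
  - simpl. lra.
  - simpl pred. rewrite S_INR. simpl pow.
    assert (E : x * (INR k * x ^ pred k) = INR k * x ^ k).
    { destruct k. simpl; ring. simpl pred. simpl pow. ring. }
    assert (0 <= x ^ k) by (apply pow_le; auto).
    assert (0 <= INR k * x ^ pred k) by (apply Rmult_le_pos; [apply pos_INR|apply pow_le; auto]).
    nra.
Qed.

Definition Mb (a : R) : R := Rmax (Rabs (ln a)) (Rabs (ln (a + 1))).

Lemma w_bound (a : R) (k : nat) : 0 < a -> Rabs (w k a) <= (Mb a + 1) ^ k / a ^ 2.
Proof.
  intro Ha.
  destruct (MVT_cor2 (fun u => ln u ^ (S k) / INR (S k)) (fun u => ln u ^ k / u) a (a + 1))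
    as [xi [Hxi1 Hxi2]]. lra.
  { intros c Hc. apply is_derive_Reals. auto_derive. lra.
    assert (0 < INR (S k)) by (apply lt_0_INR; lia). simpl pred. change (match k with | 0%nat => 1 | S _ => INR k + 1 end) with (INR (S k)). field; repeat split; lra. }
  destruct (MVT_cor2 (fun u => ln u ^ k / u) (fun u => (INR k * ln u ^ (pred k) - ln u ^ k) / u ^ 2) a xi)
    as [eta [He1 He2]]. lra.
  { intros c Hc. apply is_derive_Reals. auto_derive. lra.
    destruct k. simpl. field. lra. simpl pred. field. lra. }
  assert (Hw : w k a = - ((INR k * ln eta ^ (pred k) - ln eta ^ k) / eta ^ 2 * (xi - a))).
  { unfold w. rewrite <- He1. replace (a + 1 - a) with 1 in Hxi1 by ring.
    assert (E : (ln (a + 1) ^ S k - ln a ^ S k) / INR (S k) = ln xi ^ k / xi).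
    { assert (0 < INR (S k)) by (apply lt_0_INR; lia).
      unfold Rdiv in *. rewrite Rmult_minus_distr_r. lra. }
    rewrite E. ring. }
  assert (Hl : Rabs (ln eta) <= Mb a).
  { assert (ln a < ln eta) by (apply ln_increasing; lra).
    assert (ln eta < ln (a + 1)) by (apply ln_increasing; lra).
    unfold Mb. pose proof (Rmax_l (Rabs (ln a)) (Rabs (ln (a + 1)))).
    pose proof (Rmax_r (Rabs (ln a)) (Rabs (ln (a + 1)))).
    revert H1 H2. unfold Rabs. repeat destruct Rcase_abs; intros; lra. }
  rewrite Hw, Rabs_Ropp, Rabs_mult.
  assert (Hxa : Rabs (xi - a) <= 1) by (rewrite Rabs_pos_eq; lra).
  assert (Heta2 : 0 < eta ^ 2) by (apply pow_lt; lra).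
  assert (Hnum : Rabs (INR k * ln eta ^ (pred k) - ln eta ^ k) <= (Mb a + 1) ^ k).
  { eapply Rle_trans. apply Rabs_triang. rewrite Rabs_Ropp, Rabs_mult, <- !RPow_abs.
    rewrite (Rabs_pos_eq (INR k)) by apply pos_INR.
    eapply Rle_trans. apply pow_bound_aux. apply Rabs_pos.
    apply pow_incr. split. pose proof (Rabs_pos (ln eta)). lra. lra. }
  assert (Hd : Rabs ((INR k * ln eta ^ (pred k) - ln eta ^ k) / eta ^ 2) <= (Mb a + 1) ^ k / a ^ 2).
  { unfold Rdiv. rewrite Rabs_mult, Rabs_inv, (Rabs_pos_eq (eta ^ 2)) by lra.
    apply Rmult_le_compat. apply Rabs_pos. left; apply Rinv_0_lt_compat; lra. exact Hnum.
    apply Rinv_le_contravar. apply pow_lt; lra. apply pow_incr; lra. }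
  assert (0 <= (Mb a + 1) ^ k / a ^ 2).
  { apply Rmult_le_pos. apply pow_le. unfold Mb. pose proof (Rmax_l (Rabs (ln a)) (Rabs (ln (a + 1)))).
    pose proof (Rabs_pos (ln a)). lra. left; apply Rinv_0_lt_compat, pow_lt; lra. }
  pose proof (Rabs_pos (xi - a)). pose proof (Rabs_pos ((INR k * ln eta ^ (pred k) - ln eta ^ k) / eta ^ 2)).
  nra.
Qed.

Definition coef (y : R) (k : nat) : R :=
  Series (fun n => w k (INR n + y)) - ln y ^ (S k) / INR (S k).

Lemma Rpower_2 (a : R) : 0 < a -> Rpower a 2 = a ^ 2.
Proof. intro. replace 2 with (INR 2) by (simpl; ring). apply Rpower_pow; auto. Qed.

Lemma B_bound (a t : R) : 1 <= a -> 0 < t < 1 ->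
  exp (t * (Mb a + 1)) / a ^ 2 <= 2 * exp t * / Rpower a (2 - t).
Proof.
  intros Ha Ht.
  assert (HM : Mb a = ln (a + 1)).
  { unfold Mb. assert (0 <= ln a) by (rewrite <- ln_1; apply ln_le; lra).
    assert (ln a < ln (a + 1)) by (apply ln_increasing; lra).
    rewrite !Rabs_pos_eq by lra. apply Rmax_right. lra. }
  rewrite HM.
  replace (t * (ln (a + 1) + 1)) with (t * ln (a + 1) + t) by ring.
  rewrite exp_plus. change (exp (t * ln (a + 1))) with (Rpower (a + 1) t).
  assert (H1 : Rpower (a + 1) t <= 2 * Rpower a t).
  { apply Rle_trans with (Rpower (2 * a) t).
    apply Rle_Rpower_l; lra.
    rewrite <- Rpower_mult_distr by lra.
    apply Rmult_le_compat_r. left; apply Rpower_pos.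
    replace 2 with (Rpower 2 1) at 2 by (apply Rpower_1; lra).
    apply Rle_Rpower; lra. }
  assert (H2 : / Rpower a (2 - t) = Rpower a t / a ^ 2).
  { replace (2 - t) with (2 + - t) by ring. rewrite Rpower_plus, Rpower_Ropp, Rpower_2 by lra.
    assert (0 < Rpower a t) by apply Rpower_pos. assert (0 < a ^ 2) by (apply pow_lt; lra).
    field. split; lra. }
  rewrite H2. assert (0 < a ^ 2) by (apply pow_lt; lra). assert (0 < exp t) by apply exp_pos.
  unfold Rdiv. apply Rle_trans with (2 * Rpower a t * exp t * / a ^ 2).
  apply Rmult_le_compat_r. left; apply Rinv_0_lt_compat; lra.
  apply Rmult_le_compat_r; lra. right; ring.
Qed.

Lemma lnpart_series (y t : R) : 0 < y -> 0 < t ->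
  is_series (fun k => (-1) ^ k / INR (fact k) * (- (ln y ^ (S k) / INR (S k))) * t ^ k)
            ((Rpower y (- t) - 1) / t).
Proof.
  intros Hy Ht.
  pose proof (exp_series1 (- t * ln y)) as H.
  apply (is_series_scalR (/ t)) in H.
  apply is_series_eqR with (/ t * (exp (- t * ln y) - 1)).
  { unfold Rpower. unfold Rdiv. ring_simplify. replace (- t * ln y) with (- t * ln y) by ring. ring. }
  revert H. apply is_series_extR. intro k.
  rewrite fact_simpl, mult_INR.
  replace (- t * ln y) with ((-1) * t * ln y) by ring.
  rewrite !Rpow_mult_distr. simpl pow.
  assert (0 < INR (fact k)) by apply fact_pos_R.
  assert (0 < INR (S k)) by (apply lt_0_INR; lia).
  field. repeat split; lra.
Qed.

Lemma laurent_exists (y : R) : 0 < y -> is_stieltjes_seq y (coef y).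
Proof.
  intro Hy. exists (1 / 2). split. lra.
  intros s Hs.
  set (t := s - 1). assert (Ht : 0 < t < 1 / 2) by (unfold t; lra).
  replace s with (1 + t) by (unfold t; ring).
  set (a := fun n : nat => INR n + y).
  assert (Ha : forall n, 0 < a n) by (intro; unfold a; apply INR_y_pos; auto).
  set (u := fun n k => (-1) ^ k / INR (fact k) * w k (a n) * t ^ k).
  set (bb := fun n k => t ^ k / INR (fact k) * ((Mb (a n) + 1) ^ k / (a n) ^ 2)).
  set (B := fun n => exp (t * (Mb (a n) + 1)) / (a n) ^ 2).
  set (r := fun n => / Rpower (a n) (1 + t) - (Rpower (a n) (- t) - Rpower (a n + 1) (- t)) / t).
  assert (Hub : forall n k, Rabs (u n k) <= bb n k).
  { intros n k. unfold u, bb.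
    rewrite !Rabs_mult. unfold Rdiv. rewrite Rabs_mult, <- RPow_abs, <- RPow_abs.
    replace (Rabs (-1)) with 1 by (unfold Rabs; destruct Rcase_abs; lra). rewrite pow1.
    rewrite Rabs_inv, (Rabs_pos_eq (INR (fact k))) by (left; apply fact_pos_R).
    rewrite (Rabs_pos_eq t) by lra.
    pose proof (w_bound (a n) k (Ha n)). unfold Rdiv in H.
    assert (0 < / INR (fact k)) by (apply Rinv_0_lt_compat, fact_pos_R).
    assert (0 <= t ^ k) by (apply pow_le; lra).
    pose proof (Rabs_pos (w k (a n))).
    apply Rle_trans with (1 * / INR (fact k) * ((Mb (a n) + 1) ^ k * / a n ^ 2) * t ^ k).
    apply Rmult_le_compat_r; auto. apply Rmult_le_compat_l. lra. auto.
    right; ring. }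
  assert (HbB : forall n, is_series (bb n) (B n)).
  { intro n. unfold bb, B.
    pose proof (exp_series (t * (Mb (a n) + 1))) as H.
    apply (is_series_scalR (/ (a n) ^ 2)) in H.
    apply is_series_eqR with (/ a n ^ 2 * exp (t * (Mb (a n) + 1))). unfold Rdiv; ring.
    revert H. apply is_series_extR. intro k. rewrite Rpow_mult_distr. unfold Rdiv. ring. }
  assert (HB : ex_series B).
  { apply (ex_series_incr_1 B).
    apply ex_series_dom with (fun n => 2 * exp t * / Rpower (INR n + (y + 1)) (2 - t)).
    { intro n. unfold B. rewrite Rabs_pos_eq.
      replace (INR n + (y + 1)) with (a (S n)) by (unfold a; rewrite S_INR; ring).
      apply B_bound. unfold a; rewrite S_INR; pose proof (pos_INR n); lra. lra.
      unfold Rdiv. apply Rmult_le_pos. left; apply exp_pos.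
      left; apply Rinv_0_lt_compat, pow_lt, Ha. }
    destruct (hurwitz_ex (2 - t) (y + 1)) as [l Hl]. lra. lra.
    exists (2 * exp t * l). apply is_series_scalR. auto. }
  assert (Har : forall n, is_series (u n) (r n)).
  { intro n. unfold u, r. apply inner_series; auto. lra. }
  pose proof (fubini u bb B r Hub HbB HB Har) as HF.
  assert (Hr : Series r = hurwitz_zeta (1 + t) y - Rpower y (- t) / t).
  { apply is_series_unique. unfold r, hurwitz_zeta.
    apply is_series_minusR.
    apply Series_correct. apply hurwitz_ex; lra.
    set (T := fun n => Rpower (a n) (- t)).
    assert (HT := telescope T 0 (lim_Rpower_neg y t Hy (proj1 Ht))).
    apply (is_series_scalR (/ t)) in HT.
    apply is_series_eqR with (/ t * (T O - 0)).
    { unfold T, a. simpl. replace (0 + y) with y by ring. unfold Rdiv; ring. }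
    revert HT. apply is_series_extR. intro n. unfold T, a. rewrite S_INR. replace (INR n + 1 + y) with (INR n + y + 1) by ring. unfold Rdiv; ring. }
  rewrite Hr in HF.
  pose proof (is_series_plusR _ _ _ _ HF (lnpart_series y t Hy (proj1 Ht))) as H.
  apply is_series_eqR with (hurwitz_zeta (1 + t) y - Rpower y (- t) / t + (Rpower y (- t) - 1) / t).
  { replace (1 + t - 1) with t by ring. field. lra. }
  revert H. apply is_series_extR. intro k.
  replace (1 + t - 1) with t by ring.
  unfold coef.
  rewrite <- (Series_ext (fun n => ((-1) ^ k / INR (fact k) * t ^ k) * w k (INR n + y))).
  2: { intro n. unfold u, a. ring. }
  rewrite Series_scal_l. ring.
Qed.

Lemma der_plus (f g : R -> R) x df dg : is_derive f x df -> is_derive g x dg ->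
  is_derive (fun t => f t + g t) x (df + dg).
Proof. intros. exact (is_derive_plus f g x df dg H H0). Qed.
Lemma der_minus (f g : R -> R) x df dg : is_derive f x df -> is_derive g x dg ->
  is_derive (fun t => f t - g t) x (df - dg).
Proof. intros. exact (is_derive_minus f g x df dg H H0). Qed.
Lemma der_mult (f g : R -> R) x df dg : is_derive f x df -> is_derive g x dg ->
  is_derive (fun t => f t * g t) x (df * g x + f x * dg).
Proof. intros. exact (is_derive_mult f g x df dg H H0 Rmult_comm). Qed.
Lemma der_scal (f : R -> R) x k df : is_derive f x df -> is_derive (fun t => k * f t) x (k * df).
Proof. apply is_derive_scal. Qed.
Lemma der_comp (f g : R -> R) x df dg : is_derive f (g x) df -> is_derive g x dg ->
  is_derive (fun t => f (g t)) x (dg * df).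
Proof. intros. exact (is_derive_comp f g x df dg H H0). Qed.
Lemma der_ext (f g : R -> R) x l : (forall t, f t = g t) -> is_derive f x l -> is_derive g x l.
Proof. apply is_derive_ext. Qed.
Lemma der_eq (f : R -> R) (x l l' : R) : l = l' -> is_derive f x l -> is_derive f x l'.
Proof. intros ->; auto. Qed.

Lemma radius_pos (a : nat -> R) (t1 : R) : 0 < t1 -> ex_series (fun n => a n * t1 ^ n) ->
  Rbar_lt (Rabs 0) (CV_radius a).
Proof.
  intros Ht1 Hex.
  destruct (CV_radius_bounded a) as [Hub _].
  assert (Hb : exists M, forall n, Rabs (a n * t1 ^ n) <= M).
  { apply ex_series_lim_0 in Hex. rename Hex into Hl.
    destruct (filterlim_bounded (fun n => a n * t1 ^ n)) as [M HM].
    exists 0. exact Hl.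
    exists M. intro n. exact (HM n). }
  specialize (Hub t1 Hb). rewrite Rabs_R0.
  destruct (CV_radius a) as [r| |]; simpl in *; auto. lra.
Qed.

Lemma right_zero (h : R -> R) (l d : R) : 0 < d -> (forall t, 0 < t < d -> h t = 0) ->
  is_derive h 0 l -> h 0 = 0 /\ l = 0.
Proof.
  intros Hd Hz Hder. apply is_derive_Reals in Hder.
  assert (H0 : h 0 = 0).
  { destruct (Req_dec (h 0) 0) as [E|Hne]; auto. exfalso.
    destruct (Hder 1 Rlt_0_1) as [del Hdel].
    set (A := Rabs (h 0) / (2 * (Rabs l + 1))).
    assert (HA : 0 < A) by (unfold A; apply Rdiv_lt_0_compat; [apply Rabs_pos_lt; auto| pose proof (Rabs_pos l); lra]).
    set (t := Rmin (del / 2) (Rmin (d / 2) A)).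
    assert (Ht : 0 < t) by (unfold t; repeat apply Rmin_pos; try lra; destruct del; simpl; lra).
    assert (Htd : t < d) by (unfold t; pose proof (Rmin_r (del/2) (Rmin (d/2) A)); pose proof (Rmin_l (d/2) A); lra).
    assert (Htdel : t < del) by (unfold t; pose proof (Rmin_l (del/2) (Rmin (d/2) A)); destruct del; simpl in *; lra).
    assert (HtA : t <= A) by (unfold t; pose proof (Rmin_r (del/2) (Rmin (d/2) A)); pose proof (Rmin_r (d/2) A); lra).
    specialize (Hdel t (Rgt_not_eq _ _ Ht)). rewrite Rabs_pos_eq in Hdel by lra.
    specialize (Hdel Htdel). rewrite Rplus_0_l, (Hz t) in Hdel by lra.
    assert (Hge : Rabs (h 0) / t >= 2 * (Rabs l + 1)).
    { assert (E : Rabs (h 0) = A * (2 * (Rabs l + 1))) by (unfold A; field; pose proof (Rabs_pos l); lra).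
      assert (0 < 2 * (Rabs l + 1)) by (pose proof (Rabs_pos l); lra).
      apply Rle_ge. apply Rmult_le_reg_r with t; auto.
      replace (Rabs (h 0) / t * t) with (Rabs (h 0)) by (field; lra). nra. }
    replace ((0 - h 0) / t - l) with (- (h 0 / t + l)) in Hdel by (field; lra).
    rewrite Rabs_Ropp in Hdel.
    assert (Rabs (h 0 / t) = Rabs (h 0) / t) by (unfold Rdiv; rewrite Rabs_mult, Rabs_inv, (Rabs_pos_eq t); lra).
    pose proof (Rabs_triang_inv (h 0 / t) (- l)). rewrite Rabs_Ropp in H0.
    replace (h 0 / t - - l) with (h 0 / t + l) in H0 by ring.
    pose proof (Rabs_pos l). lra. }
  split; auto.
  destruct (Req_dec l 0) as [E|Hne]; auto. exfalso.
  destruct (Hder (Rabs l) (Rabs_pos_lt _ Hne)) as [del Hdel].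
  set (t := Rmin (del / 2) (d / 2)).
  assert (Ht : 0 < t) by (unfold t; apply Rmin_pos; destruct del; simpl; lra).
  assert (Htd : t < d) by (unfold t; pose proof (Rmin_r (del/2) (d/2)); lra).
  assert (Htdel : t < del) by (unfold t; pose proof (Rmin_l (del/2) (d/2)); destruct del; simpl in *; lra).
  specialize (Hdel t (Rgt_not_eq _ _ Ht)). rewrite Rabs_pos_eq in Hdel by lra.
  specialize (Hdel Htdel). rewrite Rplus_0_l, (Hz t), H0 in Hdel by lra.
  replace ((0 - 0) / t - l) with (- l) in Hdel by (field; lra).
  rewrite Rabs_Ropp in Hdel. lra.
Qed.

Lemma right_agree (f g : R -> R) (l1 l2 d : R) : 0 < d -> (forall t, 0 < t < d -> f t = g t) ->
  is_derive f 0 l1 -> is_derive g 0 l2 -> f 0 = g 0 /\ l1 = l2.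
Proof.
  intros Hd Hfg H1 H2.
  destruct (right_zero (fun t => f t - g t) (l1 - l2) d Hd) as [A B].
  intros t Ht. rewrite Hfg; auto; ring.
  apply der_minus; auto.
  split; lra.
Qed.

Lemma series_group2 (u : nat -> R) (l : R) : is_series u l ->
  is_series (fun n => u (2 * n)%nat + u (S (2 * n))) l.
Proof.
  intro H. apply is_series_lim.
  apply is_lim_seq_ext with (fun N => sum_n u (S (2 * N))).
  { induction n. simpl. rewrite sum_n_SR, !sum_O. reflexivity.
    rewrite (sum_n_SR (fun n => u (2 * n)%nat + u (S (2 * n))) n), <- IHn.
    replace (S (2 * S n)) with (S (S (S (2 * n)))) by lia.
    rewrite !sum_n_SR. replace (2 * S n)%nat with (S (S (2 * n))) by lia. lra. }
  apply (is_lim_seq_subseq (sum_n u) l (fun N => S (2 * N))).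
  apply eventually_subseq. intro; lia. exact H.
Qed.

Lemma zeta_dup (s y : R) : 1 < s -> 0 < y ->
  hurwitz_zeta s y + hurwitz_zeta s (y + 1 / 2) = Rpower 2 s * hurwitz_zeta s (2 * y).
Proof.
  intros Hs Hy. unfold hurwitz_zeta.
  pose proof (Series_correct _ (hurwitz_ex s (2 * y) Hs ltac:(lra))) as H2.
  apply series_group2 in H2.
  pose proof (Series_correct _ (hurwitz_ex s y Hs Hy)) as A.
  pose proof (Series_correct _ (hurwitz_ex s (y + 1/2) Hs ltac:(lra))) as B.
  pose proof (is_series_plusR _ _ _ _ A B) as AB.
  apply (is_series_scalR (/ Rpower 2 s)) in AB.
  assert (E : forall n, / Rpower 2 s * (/ Rpower (INR n + y) s + / Rpower (INR n + (y + 1 / 2)) s)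
    = / Rpower (INR (2 * n) + 2 * y) s + / Rpower (INR (S (2 * n)) + 2 * y) s).
  { intro n. rewrite S_INR, mult_INR. replace (INR 2) with 2 by (simpl; ring).
    replace (2 * INR n + 2 * y) with (2 * (INR n + y)) by ring.
    replace (2 * INR n + 1 + 2 * y) with (2 * (INR n + (y + 1 / 2))) by field.
    rewrite <- !Rpower_mult_distr by (try lra; apply INR_y_pos; lra).
    assert (0 < Rpower 2 s) by apply Rpower_pos.
    assert (0 < Rpower (INR n + y) s) by apply Rpower_pos.
    assert (0 < Rpower (INR n + (y + 1/2)) s) by apply Rpower_pos.
    field. repeat split; lra. }
  apply (is_series_extR _ _ _ E) in AB.
  pose proof (is_series_unique _ _ AB) as U1. pose proof (is_series_unique _ _ H2) as U2.
  rewrite U1 in U2.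
  assert (0 < Rpower 2 s) by apply Rpower_pos.
  rewrite <- U2. field. lra.
Qed.

Definition cc (y : R) (n : nat) : R := (-1) ^ n / INR (fact n) * stieltjes_seq y n.

Lemma stj_spec (y : R) : 0 < y -> is_stieltjes_seq y (stieltjes_seq y).
Proof.
  intro Hy. unfold stieltjes_seq. apply epsilon_spec. exists (coef y). apply laurent_exists; auto.
Qed.

Lemma PS_rep (y : R) : 0 < y -> exists d, 0 < d /\
  (forall t, 0 < t < d -> PSeries (cc y) t = hurwitz_zeta (1 + t) y - 1 / t) /\
  Rbar_lt (Rabs 0) (CV_radius (cc y)).
Proof.
  intro Hy. destruct (stj_spec y Hy) as [d [Hd H]].
  exists d. split; auto. split.
  - intros t Ht. specialize (H (1 + t) ltac:(lra)).
    replace (1 + t - 1) with t in H by ring.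
    unfold PSeries. apply is_series_unique. revert H. apply is_series_extR. intro n. unfold cc. ring.
  - apply radius_pos with (d / 2). lra.
    specialize (H (1 + d / 2) ltac:(lra)). replace (1 + d / 2 - 1) with (d / 2) in H by ring.
    exists (hurwitz_zeta (1 + d / 2) y - 1 / (d / 2)). revert H. apply is_series_extR. intro n. unfold cc. ring.
Qed.

Lemma PS_der0 (y : R) : Rbar_lt (Rabs 0) (CV_radius (cc y)) ->
  is_derive (PSeries (cc y)) 0 (- stieltjes_seq y 1).
Proof.
  intro H. apply der_eq with (PSeries (PS_derive (cc y)) 0).
  rewrite PSeries_0. unfold PS_derive, cc. simpl. field.
  apply is_derive_PSeries; auto.
Qed.

Lemma PS_val0 (y : R) : PSeries (cc y) 0 = stieltjes_seq y 0.
Proof. rewrite PSeries_0. unfold cc. simpl. field. Qed.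

Definition Qc (n : nat) : R := / INR (fact (S n)).
Definition Q (u : R) : R := PSeries Qc u.

Lemma Q_eq (u : R) : u * Q u = exp u - 1.
Proof.
  unfold Q, PSeries. rewrite <- Series_scal_l.
  apply is_series_unique. pose proof (exp_series1 u) as H. revert H.
  apply is_series_extR. intro n. unfold Qc. simpl pow. unfold Rdiv. ring.
Qed.

Lemma Q_rad : Rbar_lt (Rabs 0) (CV_radius Qc).
Proof.
  apply radius_pos with 1. lra. exists (exp 1 - 1). pose proof (exp_series1 1) as H. revert H.
  apply is_series_extR. intro n. unfold Qc. rewrite !pow1. unfold Rdiv. ring.
Qed.

Lemma Q_der0 : is_derive Q 0 (1 / 2).
Proof.
  apply der_eq with (PSeries (PS_derive Qc) 0).
  rewrite PSeries_0. unfold PS_derive, Qc. simpl. field.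
  apply is_derive_PSeries; apply Q_rad.
Qed.

Lemma Q_val0 : Q 0 = 1.
Proof. unfold Q. rewrite PSeries_0. unfold Qc. simpl. field. Qed.

Lemma stj_dup (y : R) : 0 < y ->
  stieltjes_seq y 0 + stieltjes_seq (y + 1 / 2) 0 - 2 * stieltjes_seq (2 * y) 0 = 2 * ln 2 /\
  - stieltjes_seq y 1 - stieltjes_seq (y + 1 / 2) 1
    - 2 * (ln 2 * stieltjes_seq (2 * y) 0 - stieltjes_seq (2 * y) 1) = ln 2 * ln 2.
Proof.
  intro Hy. set (L := ln 2).
  assert (HL : 0 < L) by (unfold L; rewrite <- ln_1; apply ln_increasing; lra).
  destruct (PS_rep y Hy) as [d1 [Hd1 [P1 R1]]].
  destruct (PS_rep (y + 1/2) ltac:(lra)) as [d2 [Hd2 [P2 R2]]].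
  destruct (PS_rep (2 * y) ltac:(lra)) as [d3 [Hd3 [P3 R3]]].
  set (d := Rmin d1 (Rmin d2 d3)).
  assert (Hd : 0 < d) by (unfold d; repeat apply Rmin_pos; auto).
  assert (Hdd : d <= d1 /\ d <= d2 /\ d <= d3).
  { unfold d. pose proof (Rmin_l d1 (Rmin d2 d3)). pose proof (Rmin_r d1 (Rmin d2 d3)).
    pose proof (Rmin_l d2 d3). pose proof (Rmin_r d2 d3). lra. }
  set (f := fun t => PSeries (cc y) t + PSeries (cc (y + 1/2)) t - 2 * (exp (L * t) * PSeries (cc (2 * y)) t)).
  set (g := fun t => 2 * L * Q (L * t)).
  assert (Hfg : forall t, 0 < t < d -> f t = g t).
  { intros t Ht. unfold f, g.
    rewrite P1, P2, P3 by lra.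
    assert (Hz := zeta_dup (1 + t) y ltac:(lra) Hy).
    assert (E2 : Rpower 2 (1 + t) = 2 * exp (L * t)).
    { unfold Rpower. replace ((1 + t) * ln 2) with (ln 2 + L * t) by (unfold L; ring).
      rewrite exp_plus, exp_ln by lra. ring. }
    rewrite E2 in Hz.
    assert (EQ := Q_eq (L * t)).
    assert (HQ : Q (L * t) = (exp (L * t) - 1) / (L * t)).
    { assert (0 < L * t) by nra. rewrite <- EQ. field. lra. }
    rewrite HQ.
    set (Z1 := hurwitz_zeta (1 + t) y) in *. set (Z2 := hurwitz_zeta (1 + t) (y + 1 / 2)) in *.
    set (Z3 := hurwitz_zeta (1 + t) (2 * y)) in *. set (e := exp (L * t)) in *.
    replace (Z1 - 1 / t + (Z2 - 1 / t) - 2 * (e * (Z3 - 1 / t))) with ((Z1 + Z2) - 2 * e * Z3 + 2 * (e - 1) / t) by (field; lra).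
    rewrite Hz. field. split; lra. }
  assert (Hf : is_derive f 0 (- stieltjes_seq y 1 - stieltjes_seq (y + 1/2) 1
                  - 2 * (L * stieltjes_seq (2 * y) 0 - stieltjes_seq (2 * y) 1))).
  { unfold f. apply der_eq with ((- stieltjes_seq y 1 + - stieltjes_seq (y + 1/2) 1)
        - 2 * ((L * 1) * PSeries (cc (2 * y)) 0 + exp (L * 0) * (- stieltjes_seq (2 * y) 1))).
    { rewrite PS_val0. replace (L * 0) with 0 by ring. rewrite exp_0. ring. }
    apply der_minus. apply der_plus; apply PS_der0; auto.
    apply (der_scal (fun t => exp (L * t) * PSeries (cc (2 * y)) t)). apply (der_mult (fun t => exp (L * t)) (PSeries (cc (2 * y)))). 2: apply PS_der0; auto.
    auto_derive; auto. rewrite Rmult_0_r, exp_0, !Rmult_1_r. reflexivity. }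
  assert (Hg : is_derive g 0 (L * L)).
  { unfold g. apply der_eq with (2 * L * (L * (1 / 2))). field.
    apply der_scal. apply (der_comp Q (fun t => L * t)). replace (L * 0) with 0 by ring. apply Q_der0.
    auto_derive; auto. ring. }
  destruct (right_agree f g _ _ d Hd Hfg Hf Hg) as [A B].
  unfold f, g in A. rewrite !PS_val0 in A. replace (L * 0) with 0 in A by ring.
  rewrite exp_0, Q_val0 in A.
  split; lra.
Qed.

Definition ctn (f : R -> R) (x : R) : Prop :=
  forall eps, 0 < eps -> exists del, 0 < del /\ forall y, Rabs (y - x) < del -> Rabs (f y - f x) < eps.

Lemma ctn_cpt (f : R -> R) x : ctn f x <-> continuity_pt f x.
Proof.
  split.
  - intros H eps Heps. destruct (H eps Heps) as [del [Hd Hy]]. exists del. split; auto.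
    intros y [_ Hy']. apply Hy. exact Hy'.
  - intros H eps Heps. destruct (H eps Heps) as [del [Hd Hy]]. exists del. split; auto.
    intros y Hyx. destruct (Req_dec y x) as [->|Hne].
    + unfold Rminus. rewrite Rplus_opp_r, Rabs_R0. auto.
    + apply Hy. split; auto. split; auto. unfold no_cond; auto.
Qed.

Lemma ctn_cont (f : R -> R) x : ctn f x <-> continuous f x.
Proof. rewrite ctn_cpt. apply continuity_pt_filterlim. Qed.

Lemma cont_plus (f g : R -> R) x : continuous f x -> continuous g x -> continuous (fun t => f t + g t) x.
Proof. intros. apply (continuous_plus f g x H H0). Qed.
Lemma cont_minus (f g : R -> R) x : continuous f x -> continuous g x -> continuous (fun t => f t - g t) x.
Proof. intros. apply (continuous_minus f g x H H0). Qed.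
Lemma cont_der (f : R -> R) x : ex_derive f x -> continuous f x.
Proof. intro H. exact (@ex_derive_continuous R_AbsRing R_NormedModule f x H). Qed.
Lemma cont_comp (f g : R -> R) x : continuous f x -> continuous g (f x) -> continuous (fun t => g (f t)) x.
Proof. apply continuous_comp. Qed.

Lemma ctn_local (f g : R -> R) x r : 0 < r -> (forall y, Rabs (y - x) < r -> f y = g y) -> ctn g x -> ctn f x.
Proof.
  intros Hr Heq H eps Heps. destruct (H eps Heps) as [del [Hd Hy]].
  exists (Rmin del r). split. apply Rmin_pos; auto.
  intros y Hyx. rewrite !Heq. apply Hy. pose proof (Rmin_l del r); lra.
  rewrite Rminus_diag, Rabs_R0; auto. pose proof (Rmin_r del r); lra.
Qed.

Lemma tail_bound (f M : nat -> R) F SM : is_series f F -> is_series M SM ->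
  (forall n, Rabs (f n) <= M n) -> forall N, Rabs (F - sum_n f N) <= SM - sum_n M N.
Proof.
  intros Hf HM Hb N.
  assert (Hm : forall m, Rabs (sum_n f (m + N) - sum_n f N) <= sum_n M (m + N) - sum_n M N).
  { induction m. simpl. rewrite Rminus_diag, Rabs_R0. lra.
    replace (S m + N)%nat with (S (m + N)) by lia. rewrite !sum_n_SR.
    replace (sum_n f (m + N) + f (S (m + N)) - sum_n f N) with
      ((sum_n f (m + N) - sum_n f N) + f (S (m + N))) by ring.
    pose proof (Rabs_triang (sum_n f (m + N) - sum_n f N) (f (S (m + N)))).
    specialize (Hb (S (m+N))). lra. }
  apply lim_le with (fun m => Rabs (sum_n f (m + N) - sum_n f N))
                    (fun m => sum_n M (m + N) - sum_n M N); auto.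
  - apply (is_lim_seq_abs _ (F - sum_n f N)).
    apply is_lim_seq_minus'. 2: apply is_lim_seq_const.
    apply (is_lim_seq_incr_n (sum_n f) N). apply Hf.
  - apply is_lim_seq_minus'. 2: apply is_lim_seq_const.
    apply (is_lim_seq_incr_n (sum_n M) N). apply HM.
Qed.

Lemma sum_ctn (f : nat -> R -> R) x : (forall n, ctn (f n) x) -> forall N, ctn (fun y => sum_n (fun n => f n y) N) x.
Proof.
  intros H N. induction N.
  - intros eps Heps. destruct (H O eps Heps) as [d [Hd Hy]]. exists d; split; auto.
    intros y Hyx. rewrite !sum_O. auto.
  - intros eps Heps. destruct (IHN (eps/2) ltac:(lra)) as [d1 [Hd1 H1]].
    destruct (H (S N) (eps/2) ltac:(lra)) as [d2 [Hd2 H2]].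
    exists (Rmin d1 d2). split. apply Rmin_pos; auto.
    intros y Hyx. rewrite !sum_n_SR.
    specialize (H1 y ltac:(pose proof (Rmin_l d1 d2); lra)).
    specialize (H2 y ltac:(pose proof (Rmin_r d1 d2); lra)).
    replace (sum_n (fun n => f n y) N + f (S N) y - (sum_n (fun n => f n x) N + f (S N) x))
      with ((sum_n (fun n => f n y) N - sum_n (fun n => f n x) N) + (f (S N) y - f (S N) x)) by ring.
    pose proof (Rabs_triang (sum_n (fun n => f n y) N - sum_n (fun n => f n x) N) (f (S N) y - f (S N) x)).
    lra.
Qed.

Lemma mtest_ctn (f : nat -> R -> R) (M : nat -> R) (a b x : R) :
  a < x < b -> (forall n y, a < y < b -> Rabs (f n y) <= M n) -> ex_series M ->
  (forall n, ctn (f n) x) -> ctn (fun y => Series (fun n => f n y)) x.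
Proof.
  intros Hx Hb [SM HM] Hc eps Heps.
  assert (HMl : is_lim_seq (sum_n M) SM) by exact HM.
  apply is_lim_seq_spec in HMl. destruct (HMl (mkposreal (eps / 3) ltac:(lra))) as [N HN].
  specialize (HN N (le_n N)). simpl in HN.
  destruct (sum_ctn f x Hc N (eps / 3) ltac:(lra)) as [d [Hd Hy]].
  set (r := Rmin d (Rmin (x - a) (b - x))).
  assert (Hr : 0 < r) by (unfold r; repeat apply Rmin_pos; lra).
  exists r. split; auto. intros y Hyx.
  assert (Hyab : a < y < b).
  { unfold r in Hyx. pose proof (Rmin_r d (Rmin (x - a) (b - x))). pose proof (Rmin_l (x - a) (b - x)).
    pose proof (Rmin_r (x - a) (b - x)). apply Rabs_def2 in Hyx. lra. }
  assert (Hexy : forall z, a < z < b -> ex_series (fun n => f n z)).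
  { intros z Hz. apply ex_series_dom with M; auto. exists SM; auto. }
  pose proof (tail_bound (fun n => f n y) M _ SM (Series_correct _ (Hexy y Hyab)) HM (fun n => Hb n y Hyab) N) as T1.
  pose proof (tail_bound (fun n => f n x) M _ SM (Series_correct _ (Hexy x Hx)) HM (fun n => Hb n x Hx) N) as T2.
  specialize (Hy y ltac:(unfold r in Hyx; pose proof (Rmin_l d (Rmin (x - a) (b - x))); lra)).
  rewrite Rabs_minus_sym in HN.
  assert (0 <= SM - sum_n M N).
  { eapply Rle_trans. apply Rabs_pos. exact T1. }
  rewrite Rabs_pos_eq in HN by lra.
  set (A := Series (fun n => f n y)) in *. set (B := Series (fun n => f n x)) in *.
  set (P := sum_n (fun n => f n y) N) in *. set (Q := sum_n (fun n => f n x) N) in *.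
  replace (A - B) with ((A - P) + (P - Q) - (B - Q)) by ring.
  pose proof (Rabs_triang ((A - P) + (P - Q)) (- (B - Q))). rewrite Rabs_Ropp in H0.
  pose proof (Rabs_triang (A - P) (P - Q)).
  unfold Rminus at 1. lra.
Qed.

Lemma ln_le_lin (u : R) : -1 < u -> ln (1 + u) <= u.
Proof.
  intro Hu. rewrite <- (ln_exp u) at 2. apply ln_le. lra. apply exp_ineq1_le.
Qed.

Definition phi (a : R) : R := / a - (ln (a + 1) - ln a).

Lemma phi_bounds (a : R) : 0 < a -> 0 <= phi a <= / a - / (a + 1).
Proof.
  intro Ha. unfold phi.
  assert (E1 : ln (a + 1) = ln a + ln (1 + / a)).
  { rewrite <- ln_mult by (try lra; assert (0 < / a) by (apply Rinv_0_lt_compat; lra); lra).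
    f_equal. field. lra. }
  assert (E2 : ln a = ln (a + 1) + ln (1 + - / (a + 1))).
  { rewrite <- ln_mult. f_equal. field. lra. lra.
    assert (/ (a + 1) < 1). { rewrite <- Rinv_1. apply Rinv_lt_contravar; lra. } lra. }
  assert (H1 : ln (1 + / a) <= / a) by (apply ln_le_lin; assert (0 < / a) by (apply Rinv_0_lt_compat; lra); lra).
  assert (H2 : ln (1 + - / (a + 1)) <= - / (a + 1)).
  { apply ln_le_lin. assert (/ (a + 1) < 1). { rewrite <- Rinv_1. apply Rinv_lt_contravar; lra. } lra. }
  split; lra.
Qed.

Lemma inv_tele_series (y : R) : 0 < y ->
  is_series (fun n => / (INR n + y) - / (INR n + 1 + y)) (/ y).
Proof.
  intro Hy.
  pose proof (telescope (fun n => Rpower (INR n + y) (- (1))) 0 (lim_Rpower_neg y 1 Hy Rlt_0_1)) as H.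
  revert H. cbv beta. change (INR 0) with 0. replace (0 + y) with y by ring. rewrite Rpower_Ropp, Rpower_1 by lra.
  intro H. apply is_series_eqR with (/ y - 0). ring. revert H. apply is_series_extR.
  intro n. rewrite !Rpower_Ropp, !Rpower_1. rewrite S_INR. reflexivity.
  rewrite S_INR; pose proof (pos_INR n); lra. apply INR_y_pos; auto.
Qed.

Definition Rfun (y : R) : R := Series (fun n => phi (INR n + 1 + y)).
Definition Mn (n : nat) : R := / (INR n + 1 / 2) - / (INR n + 1 + 1 / 2).

Lemma Mn_ex : ex_series Mn.
Proof. exists (/ (1 / 2)). apply inv_tele_series. lra. Qed.

Lemma phi_Mn (n : nat) (y : R) : - (1 / 2) < y -> Rabs (phi (INR n + 1 + y)) <= Mn n.
Proof.
  intro Hy. pose proof (pos_INR n).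
  destruct (phi_bounds (INR n + 1 + y)) as [A B]. lra.
  rewrite Rabs_pos_eq by auto. eapply Rle_trans. apply B. unfold Mn.
  replace (/ (INR n + 1 + y) - / (INR n + 1 + y + 1)) with (/ ((INR n + 1 + y) * (INR n + 1 + y + 1))) by (field; lra).
  replace (/ (INR n + 1 / 2) - / (INR n + 1 + 1 / 2)) with (/ ((INR n + 1 / 2) * (INR n + 1 + 1 / 2))) by (field; lra).
  apply Rinv_le_contravar. nra. nra.
Qed.

Lemma Rfun_ex (y : R) : - (1 / 2) < y -> ex_series (fun n => phi (INR n + 1 + y)).
Proof. intro Hy. apply ex_series_dom with Mn. intro; apply phi_Mn; auto. apply Mn_ex. Qed.

Lemma Rfun_ctn (y0 : R) : - (1 / 2) < y0 -> ctn Rfun y0.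
Proof.
  intro Hy. unfold Rfun.
  apply mtest_ctn with Mn (- (1 / 2)) (y0 + 1). lra.
  intros n y Hy'. apply phi_Mn; lra. apply Mn_ex.
  intro n. apply ctn_cont. apply cont_der. unfold phi. pose proof (pos_INR n).
  auto_derive. repeat split; lra.
Qed.

Definition Cf (y : R) : R := / y - ln (1 + y) + Rfun y.

Lemma coef0 (y : R) : 0 < y -> coef y 0 = Cf y.
Proof.
  intro Hy. unfold coef, Cf, Rfun.
  assert (Hw : forall a, w 0 a = phi a).
  { intro a. unfold w, phi. simpl pow. change (INR 1) with 1. unfold Rdiv. rewrite Rinv_1. ring. }
  rewrite (Series_ext _ (fun n => phi (INR n + y))) by (intro; apply Hw).
  rewrite Series_incr_1.
  2: { apply ex_series_dom with (fun n => / (INR n + y) - / (INR n + 1 + y)).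
       intro n. destruct (phi_bounds (INR n + y)) as [A B]. apply INR_y_pos; auto.
       rewrite Rabs_pos_eq by auto. replace (INR n + 1 + y) with (INR n + y + 1) by ring. auto.
       exists (/ y). apply inv_tele_series; auto. }
  rewrite (Series_ext (fun k => phi (INR (S k) + y)) (fun n => phi (INR n + 1 + y))).
  2: { intro n. rewrite S_INR. reflexivity. }
  simpl. unfold phi. replace (0 + y) with y by ring. replace (1 + y) with (y + 1) by ring. field. lra.
Qed.

Lemma pow2_ge (k : nat) : INR k <= 2 ^ k.
Proof.
  induction k. simpl; lra. rewrite S_INR. simpl pow.
  assert (1 <= 2 ^ k) by (apply pow_R1_Rle; lra). lra.
Qed.

Lemma herglotz (D : R -> R) :
  (forall y, 0 < y < 1 -> ctn D y) ->
  (forall y, 0 < y < 1 -> D (1 - y) = - D y) ->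
  (forall y, 0 < y < 1 -> D (y / 2) + D ((y + 1) / 2) = 2 * D y) ->
  (forall eps, 0 < eps -> exists del, 0 < del /\ forall y, 0 < y < del -> Rabs (D y) < eps) ->
  forall y, 0 < y < 1 -> D y = 0.
Proof.
  intros Hc Hodd Hdup Hlim.
  set (F := fun z => if Rlt_dec 0 z then if Rlt_dec z 1 then Rabs (D z) else 0 else 0).
  assert (HF : forall z, 0 < z < 1 -> F z = Rabs (D z)).
  { intros z Hz. unfold F. destruct (Rlt_dec 0 z); [|lra]. destruct (Rlt_dec z 1); [auto|lra]. }
  assert (HF0 : F 0 = 0). { unfold F. destruct (Rlt_dec 0 0); [lra|auto]. }
  assert (HFc : forall c, 0 <= c <= 1 / 2 -> continuity_pt F c).
  { intros c Hc0. apply ctn_cpt.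
    destruct (Req_dec c 0) as [->|Hne].
    - intros eps Heps. destruct (Hlim eps Heps) as [del [Hdel Hd]].
      exists (Rmin del (1 / 2)). split. apply Rmin_pos; lra.
      intros z Hz. rewrite HF0, Rminus_0_r. rewrite Rminus_0_r in Hz.
      pose proof (Rmin_l del (1/2)). pose proof (Rmin_r del (1/2)).
      apply Rabs_def2 in Hz.
      destruct (Rlt_dec 0 z).
      + rewrite HF by lra. rewrite Rabs_Rabsolu. apply Hd. lra.
      + unfold F. destruct (Rlt_dec 0 z); [lra|]. rewrite Rabs_R0. auto.
    - apply ctn_local with (fun z => Rabs (D z)) (Rmin c (1 - c)).
      apply Rmin_pos; lra.
      intros z Hz. pose proof (Rmin_l c (1 - c)). pose proof (Rmin_r c (1 - c)).
      apply Rabs_def2 in Hz. apply HF. lra.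
      intros eps Heps. destruct (Hc c ltac:(lra) eps Heps) as [del [Hdel Hd]].
      exists del. split; auto. intros z Hz. eapply Rle_lt_trans. apply Rabs_triang_inv2. auto. }
  destruct (continuity_ab_maj F 0 (1 / 2) ltac:(lra) HFc) as [Mx [HM HMx]].
  set (M := F Mx) in *.
  assert (HMpos : 0 <= M).
  { unfold M, F. destruct (Rlt_dec 0 Mx); [destruct (Rlt_dec Mx 1)|]; try lra. apply Rabs_pos. }
  assert (Hbound : forall z, 0 < z < 1 -> Rabs (D z) <= M).
  { intros z Hz. destruct (Rle_dec z (1 / 2)).
    - rewrite <- HF by lra. apply HM. lra.
    - assert (E : D z = - D (1 - z)).
      { rewrite <- (Hodd (1 - z)) by lra. f_equal. ring. }
      rewrite E, Rabs_Ropp, <- HF by lra. apply HM. lra. }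
  assert (HM0 : M <= 0).
  { destruct (Req_dec Mx 0) as [E|Hne].
    - unfold M. rewrite E, HF0. lra.
    - assert (HMx' : 0 < Mx <= 1 / 2) by lra.
      assert (HMe : M = Rabs (D Mx)) by (unfold M; apply HF; lra).
      assert (Hk : forall k, Rabs (D (Mx / 2 ^ k)) = M).
      { induction k.
        - simpl. replace (Mx / 1) with Mx by field. auto.
        - set (z := Mx / 2 ^ k) in *.
          assert (Hz : 0 < z <= 1 / 2).
          { unfold z. assert (1 <= 2 ^ k) by (apply pow_R1_Rle; lra).
            split. apply Rdiv_lt_0_compat; lra.
            apply Rle_trans with Mx; [|lra]. unfold Rdiv. rewrite <- (Rmult_1_r Mx) at 2.
            apply Rmult_le_compat_l. lra. rewrite <- Rinv_1. apply Rinv_le_contravar; lra. }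
          replace (Mx / 2 ^ S k) with (z / 2) by (unfold z; simpl pow; field; apply pow_nonzero; lra).
          pose proof (Hdup z ltac:(lra)) as Hd.
          assert (H1 : Rabs (D (z / 2)) <= M) by (apply Hbound; lra).
          assert (H2 : Rabs (D ((z + 1) / 2)) <= M) by (apply Hbound; lra).
          assert (H3 : Rabs (2 * D z) <= Rabs (D (z / 2)) + Rabs (D ((z + 1) / 2))).
          { rewrite <- Hd. apply Rabs_triang. }
          rewrite Rabs_mult, IHk, Rabs_pos_eq in H3 by lra. lra. }
      destruct (Rle_dec M 0) as [|Hgt]; auto. exfalso.
      destruct (Hlim M ltac:(lra)) as [del [Hdel Hd]].
      destruct (INR_unbounded (Mx / del)) as [k Hk'].
      pose proof (pow2_ge k).
      assert (H2k : 0 < 2 ^ k) by (apply pow_lt; lra).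
      assert (Hsmall : Mx / 2 ^ k < del).
      { apply (Rmult_lt_reg_r (2 ^ k)); auto. replace (Mx / 2 ^ k * 2 ^ k) with Mx by (field; lra).
        assert (Mx / del < 2 ^ k) by lra.
        apply (Rmult_lt_reg_r (/ del)). apply Rinv_0_lt_compat; auto.
        replace (del * 2 ^ k * / del) with (2 ^ k) by (field; lra). exact H0. }
      assert (0 < Mx / 2 ^ k) by (apply Rdiv_lt_0_compat; lra).
      specialize (Hd (Mx / 2 ^ k) ltac:(lra)). rewrite Hk in Hd. lra. }
  intros y Hy. pose proof (Hbound y Hy). pose proof (Rabs_pos (D y)).
  apply Rabs_eq_0. lra.
Qed.

Lemma stj0_eq (y : R) : 0 < y -> stieltjes_seq y 0 = Cf y.
Proof.
  intro Hy. rewrite <- coef0 by auto.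
  set (ccf := fun n => (-1) ^ n / INR (fact n) * coef y n).
  destruct (PS_rep y Hy) as [d1 [Hd1 [P1 R1]]].
  destruct (laurent_exists y Hy) as [d2 [Hd2 H2]].
  assert (P2 : forall t, 0 < t < d2 -> PSeries ccf t = hurwitz_zeta (1 + t) y - 1 / t).
  { intros t Ht. specialize (H2 (1 + t) ltac:(lra)). replace (1 + t - 1) with t in H2 by ring.
    unfold PSeries. apply is_series_unique. revert H2. apply is_series_extR. intro n. unfold ccf. ring. }
  assert (R2 : Rbar_lt (Rabs 0) (CV_radius ccf)).
  { apply radius_pos with (d2 / 2). lra.
    specialize (H2 (1 + d2 / 2) ltac:(lra)). replace (1 + d2 / 2 - 1) with (d2 / 2) in H2 by ring.
    exists (hurwitz_zeta (1 + d2 / 2) y - 1 / (d2 / 2)). revert H2. apply is_series_extR. intro n. unfold ccf. ring. }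
  destruct (right_agree (PSeries (cc y)) (PSeries ccf) (PSeries (PS_derive (cc y)) 0) (PSeries (PS_derive ccf) 0) (Rmin d1 d2) (Rmin_pos _ _ Hd1 Hd2)) as [A _].
  { intros t Ht. pose proof (Rmin_l d1 d2). pose proof (Rmin_r d1 d2). rewrite P1, P2 by lra. reflexivity. }
  apply is_derive_PSeries; auto. apply is_derive_PSeries; auto.
  rewrite PS_val0, PSeries_0 in A. rewrite A. unfold ccf. simpl. field.
Qed.

Lemma K_bound (y : R) : 0 < y <= 1 / 4 -> Rabs (/ y - PI * cot (PI * y)) <= PI ^ 2 * y.
Proof.
  intro Hy. pose proof PI_4. pose proof PI_RGT_0.
  set (u := PI * y).
  assert (Hu : 0 < u <= 1) by (unfold u; nra).
  assert (Hs1 : u - u ^ 3 / 6 <= sin u).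
  { destruct (pre_sin_bound u 0) as [A _]; try lra.
    unfold sin_approx, sin_term in A. simpl in A. lra. }
  assert (Hs2 : sin u < u) by (apply sin_lt_x; lra).
  assert (Hc1 : 1 - u ^ 2 / 2 <= cos u).
  { destruct (pre_cos_bound u 0) as [A _]; try lra.
    unfold cos_approx, cos_term in A. simpl in A. lra. }
  assert (Hc2 : cos u <= 1) by apply COS_bound.
  assert (Hspos : u / 2 <= sin u) by nra.
  unfold cot.
  assert (HPI : PI = u / y) by (unfold u; field; lra).
  rewrite HPI at 1.
  replace (/ y - u / y * (cos u / sin u)) with ((sin u - u * cos u) / (y * sin u)) by (field; split; lra).
  unfold Rdiv. rewrite Rabs_mult, Rabs_inv, (Rabs_pos_eq (y * sin u)) by nra.
  assert (HN : Rabs (sin u - u * cos u) <= u ^ 3 / 2).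
  { apply Rabs_le. split; nra. }
  apply (Rmult_le_reg_r (y * sin u)). nra.
  rewrite Rmult_assoc, Rinv_l, Rmult_1_r by nra.
  apply Rle_trans with (u ^ 3 / 2). auto.
  replace (PI ^ 2 * y * (y * sin u)) with (u ^ 2 * sin u) by (unfold u; ring).
  nra.
Qed.

Lemma cot_dup (y : R) : 0 < y < 1 -> cot (PI * (y / 2)) + cot (PI * ((y + 1) / 2)) = 2 * cot (PI * y).
Proof.
  intro Hy. pose proof PI_RGT_0. set (a := PI * (y / 2)).
  replace (PI * ((y + 1) / 2)) with (a + PI / 2) by (unfold a; field).
  replace (PI * y) with (2 * a) by (unfold a; field).
  assert (0 < sin a) by (apply sin_gt_0; unfold a; nra).
  assert (0 < cos a) by (apply cos_gt_0; unfold a; nra).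
  unfold cot. rewrite cos_plus, sin_plus, cos_PI2, sin_PI2, sin_2a, cos_2a.
  field. split; lra.
Qed.

Lemma cot_refl (y : R) : cot (PI * (1 - y)) = - cot (PI * y).
Proof.
  unfold cot. replace (PI * (1 - y)) with (PI - PI * y) by ring.
  rewrite Rtrigo_facts.cos_pi_minus, sin_PI_x. unfold Rdiv. ring.
Qed.

Definition Dh (y : R) : R := Cf y - Cf (1 - y) - PI * cot (PI * y).

Lemma Cf_1 : Cf 1 = Rfun 0.
Proof.
  unfold Cf, Rfun. rewrite (Series_incr_1 (fun n => phi (INR n + 1 + 0))).
  2: apply Rfun_ex; lra.
  rewrite (Series_ext (fun k => phi (INR (S k) + 1 + 0)) (fun n => phi (INR n + 1 + 1))).
  2: { intro n. rewrite S_INR. f_equal. ring. }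
  unfold phi. simpl. replace (0 + 1 + 0) with 1 by ring. replace (1 + 1) with 2 by ring.
  rewrite ln_1. field.
Qed.

Lemma Cf_ctn (y : R) : 0 < y -> continuous Cf y.
Proof.
  intro Hy. unfold Cf. apply cont_plus. apply cont_der. auto_derive. lra.
  apply ctn_cont. apply Rfun_ctn. lra.
Qed.

Lemma D_dup (y : R) : 0 < y < 1 -> Dh (y / 2) + Dh ((y + 1) / 2) = 2 * Dh y.
Proof.
  intro Hy.
  destruct (stj_dup (y / 2) ltac:(lra)) as [E0a _].
  destruct (stj_dup ((1 - y) / 2) ltac:(lra)) as [E0b _].
  rewrite !stj0_eq in E0a by lra. rewrite !stj0_eq in E0b by lra.
  replace (y / 2 + 1 / 2) with ((y + 1) / 2) in E0a by field.
  replace (2 * (y / 2)) with y in E0a by field.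
  replace ((1 - y) / 2 + 1 / 2) with (1 - y / 2) in E0b by field.
  replace (2 * ((1 - y) / 2)) with (1 - y) in E0b by field.
  unfold Dh. replace (1 - (y + 1) / 2) with ((1 - y) / 2) by field.
  pose proof (cot_dup y Hy). nra.
Qed.

Lemma D_odd (y : R) : Dh (1 - y) = - Dh y.
Proof.
  unfold Dh. replace (1 - (1 - y)) with y by ring. rewrite cot_refl. ring.
Qed.

Lemma D_ctn (y : R) : 0 < y < 1 -> ctn Dh y.
Proof.
  intro Hy. apply ctn_cont. unfold Dh.
  apply cont_minus. apply cont_minus. apply Cf_ctn; lra.
  apply (cont_comp (fun t => 1 - t) Cf). apply cont_der. auto_derive. auto.
  apply Cf_ctn; lra.
  apply cont_der. unfold cot. auto_derive.
  apply Rgt_not_eq. apply sin_gt_0. pose proof PI_RGT_0. nra. pose proof PI_RGT_0. nra.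
Qed.

Lemma D_lim (eps : R) : 0 < eps -> exists del, 0 < del /\ forall y, 0 < y < del -> Rabs (Dh y) < eps.
Proof.
  intro He.
  set (G := fun y => - ln (1 + y) + Rfun y - Cf (1 - y)).
  assert (HG0 : G 0 = 0).
  { unfold G. replace (1 + 0) with 1 by ring. replace (1 - 0) with 1 by ring. rewrite ln_1, Cf_1. ring. }
  assert (HGc : ctn G 0).
  { apply ctn_cont. unfold G. apply cont_minus. apply cont_plus.
    apply cont_der. auto_derive. lra.
    apply ctn_cont. apply Rfun_ctn. lra.
    apply (cont_comp (fun t => 1 - t) Cf). apply cont_der. auto_derive. auto.
    apply Cf_ctn; lra. }
  destruct (HGc (eps / 2) ltac:(lra)) as [d1 [Hd1 HG]].
  pose proof PI_RGT_0.
  assert (HP2 : 0 < PI ^ 2) by (apply pow_lt; lra).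
  exists (Rmin d1 (Rmin (1 / 4) (eps / (2 * PI ^ 2)))).
  split. repeat apply Rmin_pos; try lra. apply Rdiv_lt_0_compat; lra.
  intros y Hy.
  pose proof (Rmin_l d1 (Rmin (1 / 4) (eps / (2 * PI ^ 2)))).
  pose proof (Rmin_r d1 (Rmin (1 / 4) (eps / (2 * PI ^ 2)))).
  pose proof (Rmin_l (1 / 4) (eps / (2 * PI ^ 2))).
  pose proof (Rmin_r (1 / 4) (eps / (2 * PI ^ 2))).
  assert (E : Dh y = (/ y - PI * cot (PI * y)) + G y) by (unfold Dh, G, Cf; ring).
  rewrite E.
  specialize (HG y ltac:(rewrite Rminus_0_r, Rabs_pos_eq; lra)). rewrite HG0, Rminus_0_r in HG.
  pose proof (K_bound y ltac:(lra)).
  assert (PI ^ 2 * y <= eps / 2).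
  { assert (y <= eps / (2 * PI ^ 2)) by lra.
    apply Rmult_le_compat_l with (r := PI ^ 2) in H5; [|lra].
    replace (PI ^ 2 * (eps / (2 * PI ^ 2))) with (eps / 2) in H5 by (field; lra). lra. }
  pose proof (Rabs_triang (/ y - PI * cot (PI * y)) (G y)). lra.
Qed.

Lemma reflection (y : R) : 0 < y < 1 -> stieltjes_seq y 0 - stieltjes_seq (1 - y) 0 = PI * cot (PI * y).
Proof.
  intro Hy. rewrite !stj0_eq by lra.
  pose proof (herglotz Dh D_ctn (fun y _ => D_odd y) D_dup D_lim y Hy) as H.
  unfold Dh in H. lra.
Qed.

Theorem mainTheorem8 (x : R) (hx : 0 < x < 1 / 2) :
  gen_stieltjes 1 (x + 1 / 2) - gen_stieltjes 1 (1 / 2 - x)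
  = 2 * (gen_stieltjes 1 (2 * x) - gen_stieltjes 1 (1 - 2 * x))
    - (gen_stieltjes 1 x - gen_stieltjes 1 (1 - x))
    - 2 * PI * ln 2 * cot (2 * PI * x).
Proof.
  unfold gen_stieltjes.
  destruct (stj_dup x ltac:(lra)) as [_ A].
  destruct (stj_dup (1 / 2 - x) ltac:(lra)) as [_ B].
  replace (1 / 2 - x + 1 / 2) with (1 - x) in B by lra.
  replace (2 * (1 / 2 - x)) with (1 - 2 * x) in B by lra.
  pose proof (reflection (2 * x) ltac:(lra)) as C.
  replace (2 * PI * x) with (PI * (2 * x)) by ring.
  set (L := ln 2) in *.
  set (ct := cot (PI * (2 * x))) in *.
  assert (C' : L * (stieltjes_seq (2 * x) 0 - stieltjes_seq (1 - 2 * x) 0) = L * (PI * ct)) by (rewrite C; ring).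
  nra.
Qed.
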